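(* For every formula $\varphi$ containing no occurrence of $\mathbf{GF}$ or $\mathbf{FG}$, each of $\mathbf{GF}\varphi$ and $\mathbf{FG}\varphi$ is equivalent to a formula in normal form with at most $3^{|\varphi|}\cdot|\varphi|$ nodes.
   Context: Fix a finite set $Ap$ of atomic propositions. A word is an infinite sequence $w = w[0]w[1]\dots$ of letters of $2^{Ap}$, and $w_i$ denotes the suffix $w[i]w[i+1]\dots$. Formulas are generated by $\varphi ::= \mathbf{true} \mid \mathbf{false} \mid a \mid \neg a \mid \varphi\wedge\varphi \mid \varphi\vee\varphi \mid \mathbf{X}\varphi \mid \varphi\,\mathbf{U}\,\varphi \mid \varphi\,\mathbf{W}\,\varphi \mid \mathbf{GF}\varphi \mid \mathbf{FG}\varphi$ ($a\in Ap$), where $\mathbf{GF}$, $\mathbf{FG}$ are single unary operators (limit operators). Semantics: $w\models a$ iff $a\in w[0]$, $w\models\neg a$ iff $a\notin w[0]$, Boolean constants and connectives as usual; $w\models\mathbf{X}\varphi$ iff $w_1\models\varphi$; $w\models\varphi\mathbf{U}\psi$ iff $\exists k$: $w_k\models\psi$ and $\forall j<k$: $w_j\models\varphi$; $w\models\varphi\mathbf{W}\psi$ iff ($\forall k$: $w_k\models\varphi$) or $w\models\varphi\mathbf{U}\psi$; $w\models\mathbf{GF}\varphi$ iff $w_k\models\varphi$ for infinitely many $k$; $w\models\mathbf{FG}\varphi$ iff $\exists n\,\forall k\geq n$: $w_k\models\varphi$. Two formulas are equivalent if satisfied by the same words. The syntax tree $T_\varphi$ has leaves $\mathbf{true},\mathbf{false},a,\neg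 a$ and one internal node per operator occurrence; $|\varphi|$ is its number of nodes. $\mathbf{U}$-, $\mathbf{W}$-, $\mathbf{X}$-, $\mathbf{GF}$-, $\mathbf{FG}$-nodes are nodes whose subformula has that top operator; $\mathbf{GF}$- and $\mathbf{FG}$-nodes are limit nodes; all five kinds are temporal nodes. A node is under another if it is a proper descendant of it. A formula is in normal form if (1) no $\mathbf{U}$-node is under a $\mathbf{W}$-node; (2) no limit node is under another temporal node; (3) no $\mathbf{W}$-node is under a $\mathbf{GF}$-node and no $\mathbf{U}$-node is under an $\mathbf{FG}$-node. *)

(* Defs.v *)
From mathcomp Require Import all_boot.
Set Implicit Arguments. Unset Strict Implicit. Unset Printing Implicit Defensive.

Inductive form (Ap : Type) : Type :=
| FTrue | FFalse
| FAtom of Ap | FNAtom of Ap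
| FAnd of form Ap & form Ap
| FOr  of form Ap & form Ap
| FX   of form Ap
| FU   of form Ap & form Ap
| FW   of form Ap & form Ap
| FGF  of form Ap
| FFG  of form Ap.

Arguments FTrue {Ap}. Arguments FFalse {Ap}.

Definition word (Ap : finType) := nat -> {set Ap}.

(* sat w i phi  <->  w_i |= phi  (w_i is the suffix starting at position i) *)
Fixpoint sat (Ap : finType) (w : word Ap) (i : nat) (phi : form Ap) : Prop :=
  match phi with
  | FTrue => True
  | FFalse => False
  | FAtom a => a \in w i
  | FNAtom a => a \notin w i
  | FAnd p q => sat w i p /\ sat w i q
  | FOr p q => sat w i p \/ sat w i q
  | FX p => sat w (i.+1) p
  | FU p q => exists k, sat w (i + k) q /\ forall j, j < k -> sat w (i + j) p
  | FW p q => (forall k, sat w (i + k) p) \/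
              (exists k, sat w (i + k) q /\ forall j, j < k -> sat w (i + j) p)
  | FGF p => forall n, exists k, n <= k /\ sat w (i + k) p
  | FFG p => exists n, forall k, n <= k -> sat w (i + k) p
  end.

Definition ltl_equiv (Ap : finType) (phi psi : form Ap) : Prop :=
  forall w : word Ap, sat w 0 phi <-> sat w 0 psi.

Fixpoint fsize (Ap : Type) (phi : form Ap) : nat :=
  match phi with
  | FTrue | FFalse | FAtom _ | FNAtom _ => 1
  | FAnd p q | FOr p q | FU p q | FW p q => (fsize p + fsize q).+1
  | FX p | FGF p | FFG p => (fsize p).+1
  end.

Fixpoint has_U (Ap : Type) (phi : form Ap) : bool :=
  match phi with
  | FTrue | FFalse | FAtom _ | FNAtom _ => false
  | FU _ _ => true
  | FAnd p q | FOr p q | FW p q => has_U p || has_U q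
  | FX p | FGF p | FFG p => has_U p
  end.

Fixpoint has_W (Ap : Type) (phi : form Ap) : bool :=
  match phi with
  | FTrue | FFalse | FAtom _ | FNAtom _ => false
  | FW _ _ => true
  | FAnd p q | FOr p q | FU p q => has_W p || has_W q
  | FX p | FGF p | FFG p => has_W p
  end.

Fixpoint has_lim (Ap : Type) (phi : form Ap) : bool :=
  match phi with
  | FTrue | FFalse | FAtom _ | FNAtom _ => false
  | FGF _ | FFG _ => true
  | FAnd p q | FOr p q | FU p q | FW p q => has_lim p || has_lim q
  | FX p => has_lim p
  end.

(* Normal form: for every node, the constraints on the nodes strictly below it:
   (1) no U-node under a W-node;
   (2) no limit node under a temporal (X,U,W,GF,FG) node;
   (3) no W-node under a GF-node, no U-node under an FG-node. *)
Fixpoint normal_form (Ap : Type) (phi : form Ap) : bool :=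
  match phi with
  | FTrue | FFalse | FAtom _ | FNAtom _ => true
  | FAnd p q | FOr p q => normal_form p && normal_form q
  | FX p => ~~ has_lim p && normal_form p
  | FU p q => [&& ~~ has_lim p, ~~ has_lim q, normal_form p & normal_form q]
  | FW p q => [&& ~~ has_U p, ~~ has_U q, ~~ has_lim p, ~~ has_lim q,
                  normal_form p & normal_form q]
  | FGF p => [&& ~~ has_lim p, ~~ has_W p & normal_form p]
  | FFG p => [&& ~~ has_lim p, ~~ has_U p & normal_form p]
  end.

(* Main.v *)
Require Import Defs.
From mathcomp Require Import all_boot.
From mathcomp Require Import zify.
From Stdlib Require Import Setoid Classical.
Set Implicit Arguments. Unset Strict Implicit.
Set Bullet Behavior "Strict Subproofs".

Inductive aform (Ap : Type) : Type :=
| AT | AF | AA of Ap | ANA of Ap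
| AAnd of aform Ap & aform Ap | AOr of aform Ap & aform Ap
| AX of aform Ap
| AU of bool & aform Ap & aform Ap
| AW of bool & aform Ap & aform Ap.
Arguments AT {Ap}. Arguments AF {Ap}.

Fixpoint erase Ap (t : aform Ap) : form Ap := match t with
 | AT => FTrue | AF => FFalse | AA a => FAtom a | ANA a => FNAtom a
 | AAnd x y => FAnd (erase x) (erase y) | AOr x y => FOr (erase x) (erase y)
 | AX x => FX (erase x) | AU _ x y => FU (erase x) (erase y)
 | AW _ x y => FW (erase x) (erase y) end.

Fixpoint mu Ap (t : aform Ap) : form Ap := match t with
 | AT => FTrue | AF => FFalse | AA a => FAtom a | ANA a => FNAtom a
 | AAnd x y => FAnd (mu x) (mu y) | AOr x y => FOr (mu x) (mu y)
 | AX x => FX (mu x) | AU _ x y => FU (mu x) (mu y)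
 | AW m x y => if m then FTrue else FU (mu x) (mu y) end.

Fixpoint nu Ap (t : aform Ap) : form Ap := match t with
 | AT => FTrue | AF => FFalse | AA a => FAtom a | ANA a => FNAtom a
 | AAnd x y => FAnd (nu x) (nu y) | AOr x y => FOr (nu x) (nu y)
 | AX x => FX (nu x) | AU m x y => if m then FW (nu x) (nu y) else FFalse
 | AW _ x y => FW (nu x) (nu y) end.

Fixpoint condsF Ap (t : aform Ap) (acc : form Ap) : form Ap := match t with
 | AAnd x y => condsF x (condsF y acc)
 | AOr x y => condsF x (condsF y acc)
 | AX x => condsF x acc
 | AU m x y => if m then FAnd (FGF (FU (mu x) (mu y))) (condsF x (condsF y acc))
               else condsF x (condsF y acc)
 | AW m x y => if m then FAnd (FFG (FW (nu x) (nu y))) (condsF x (condsF y acc))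
               else condsF x (condsF y acc)
 | _ => acc end.

Definition GFp (Ap : finType) (w : word Ap) (f : form Ap) :=
  forall n, exists k, n <= k /\ sat w k f.
Definition FGp (Ap : finType) (w : word Ap) (f : form Ap) :=
  exists n, forall k, n <= k -> sat w k f.

Fixpoint condsS (Ap : finType) (w : word Ap) (t : aform Ap) : Prop := match t with
 | AAnd x y => condsS w x /\ condsS w y
 | AOr x y => condsS w x /\ condsS w y
 | AX x => condsS w x
 | AU m x y => (if m then GFp w (FU (mu x) (mu y)) else True) /\ condsS w x /\ condsS w y
 | AW m x y => (if m then FGp w (FW (nu x) (nu y)) else True) /\ condsS w x /\ condsS w y
 | _ => True end.

Fixpoint soundU (Ap : finType) (w : word Ap) (t : aform Ap) : Prop := match t with
 | AAnd x y => soundU w x /\ soundU w y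
 | AOr x y => soundU w x /\ soundU w y
 | AX x => soundU w x
 | AU m x y => (if m then GFp w (FU (erase x) (erase y)) else True) /\ soundU w x /\ soundU w y
 | AW m x y => soundU w x /\ soundU w y
 | _ => True end.

Fixpoint soundW (Ap : finType) (w : word Ap) (t : aform Ap) : Prop := match t with
 | AAnd x y => soundW w x /\ soundW w y
 | AOr x y => soundW w x /\ soundW w y
 | AX x => soundW w x
 | AU m x y => soundW w x /\ soundW w y
 | AW m x y => (if m then FGp w (FW (erase x) (erase y)) else True) /\ soundW w x /\ soundW w y
 | _ => True end.

Fixpoint complete (Ap : finType) (w : word Ap) (t : aform Ap) : Prop := match t with
 | AAnd x y => complete w x /\ complete w y
 | AOr x y => complete w x /\ complete w y
 | AX x => complete w x
 | AU m x y => (if m then True else ~ GFp w (FU (erase x) (erase y))) /\ complete w x /\ complete w y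
 | AW m x y => (if m then True else ~ FGp w (FW (erase x) (erase y))) /\ complete w x /\ complete w y
 | _ => True end.

Lemma sat_and (Ap : finType) (w : word Ap) i a b : sat w i (FAnd a b) <-> sat w i a /\ sat w i b.
Proof. by []. Qed.

Lemma sat0GF (Ap : finType) (w : word Ap) f : sat w 0 (FGF f) <-> GFp w f.
Proof. by rewrite /GFp /=; split=> H n; have [k Hk] := H n; exists k; rewrite add0n in Hk *. Qed.

Lemma sat0FG (Ap : finType) (w : word Ap) f : sat w 0 (FFG f) <-> FGp w f.
Proof. by rewrite /FGp /=; split=> -[n H]; exists n => k Hk; have := H k Hk; rewrite add0n. Qed.

Lemma condsF_sat (Ap : finType) (w : word Ap) t acc :
  sat w 0 (condsF t acc) <-> condsS w t /\ sat w 0 acc.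
Proof.
elim: t acc => [||a|a|x IHx y IHy|x IHx y IHy|x IHx|m x IHx y IHy|m x IHx y IHy] acc;
  cbn [condsF condsS]; try tauto.
- rewrite IHx IHy; tauto.
- rewrite IHx IHy; tauto.
- rewrite IHx; tauto.
- case: m; rewrite ?sat_and ?sat0GF IHx IHy; tauto.
- case: m; rewrite ?sat_and ?sat0FG IHx IHy; tauto.
Qed.

Lemma evNot (Ap : finType) (w : word Ap) f : ~ GFp w f -> exists N, forall k, N <= k -> ~ sat w k f.
Proof.
move=> Hng; apply: NNPP => H; apply: Hng => n; apply: NNPP => H2; apply: H.
exists n => k Hk Hs; apply: H2; by exists k.
Qed.

Lemma N1 (Ap : finType) (w : word Ap) t : soundU w t -> forall i, sat w i (nu t) -> sat w i (erase t).
Proof.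
elim: t => [||a|a|x IHx y IHy|x IHx y IHy|x IHx|m x IHx y IHy|m x IHx y IHy] //=.
- move=> [Hx Hy] i [H1 H2]; split; [exact: IHx | exact: IHy].
- move=> [Hx Hy] i [H1|H2]; [left; exact: IHx | right; exact: IHy].
- move=> Hx i H; exact: IHx.
- case: m => [[HG [Hx Hy]] i [Hall|[k [Hk Hj]]]|//].
  + have [k [Hik [k' [Hk' _]]]] := HG i.
    exists (k + k' - i); split.
    * have -> : i + (k + k' - i) = k + k' by lia. exact: Hk'.
    * move=> j _; exact: IHx Hx _ (Hall j).
  + exists k; split; [exact: IHy | move=> j Hj'; exact: IHx (Hj j Hj')].
- move=> [Hx Hy] i [Hall|[k [Hk Hj]]].
  + left => k; exact: IHx.
  + right; exists k; split; [exact: IHy | move=> j Hj'; exact: IHx (Hj j Hj')].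
Qed.

Lemma N2 (Ap : finType) (w : word Ap) t : complete w t ->
  exists N, forall i, N <= i -> sat w i (erase t) -> sat w i (nu t).
Proof.
elim: t => [||a|a|x IHx y IHy|x IHx y IHy|x IHx|m x IHx y IHy|m x IHx y IHy] /=;
  try by move=> _; exists 0.
- move=> [/IHx [Nx Hx] /IHy [Ny Hy]]; exists (Nx + Ny) => i Hi [H1 H2].
  split; [apply: Hx => //; lia | apply: Hy => //; lia].
- move=> [/IHx [Nx Hx] /IHy [Ny Hy]]; exists (Nx + Ny) => i Hi [H1|H2].
  + left; apply: Hx => //; lia.
  + right; apply: Hy => //; lia.
- move=> /IHx [Nx Hx]; exists Nx => i Hi H; apply: Hx => //; lia.
- case: m => [[_ [/IHx [Nx Hx] /IHy [Ny Hy]]]|[Hn _]].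
  + exists (Nx + Ny) => i Hi [k [Hk Hj]]; right; exists k; split.
    * apply: Hy => //; lia.
    * move=> j Hj'; apply: Hx; [lia | exact: Hj].
  + have [N HN] := evNot Hn; exists N => i Hi H; exact: (HN i Hi H).
- move=> [_ [/IHx [Nx Hx] /IHy [Ny Hy]]].
  exists (Nx + Ny) => i Hi [Hall|[k [Hk Hj]]].
  + left => k; apply: Hx => //; lia.
  + right; exists k; split.
    * apply: Hy => //; lia.
    * move=> j Hj'; apply: Hx; [lia | exact: Hj].
Qed.

Lemma M1 (Ap : finType) (w : word Ap) t : complete w t -> forall i, sat w i (erase t) -> sat w i (mu t).
Proof.
elim: t => [||a|a|x IHx y IHy|x IHx y IHy|x IHx|m x IHx y IHy|m x IHx y IHy] //=.
- move=> [Hx Hy] i [H1 H2]; split; [exact: IHx | exact: IHy].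
- move=> [Hx Hy] i [H1|H2]; [left; exact: IHx | right; exact: IHy].
- move=> Hx i H; exact: IHx.
- move=> [_ [Hx Hy]] i [k [Hk Hj]]; exists k; split; [exact: IHy | move=> j Hj'; exact: IHx (Hj j Hj')].
- case: m => [//|[Hn [Hx Hy]] i [Hall|[k [Hk Hj]]]].
  + exfalso; apply: Hn; exists i => k Hk; left => k'.
    have := Hall (k - i + k'); have -> : i + (k - i + k') = k + k' by lia. done.
  + exists k; split; [exact: IHy | move=> j Hj'; exact: IHx (Hj j Hj')].
Qed.

Lemma M2 (Ap : finType) (w : word Ap) t : soundW w t ->
  exists N, forall i, N <= i -> sat w i (mu t) -> sat w i (erase t).
Proof.
elim: t => [||a|a|x IHx y IHy|x IHx y IHy|x IHx|m x IHx y IHy|m x IHx y IHy] /=;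
  try by move=> _; exists 0.
- move=> [/IHx [Nx Hx] /IHy [Ny Hy]]; exists (Nx + Ny) => i Hi [H1 H2].
  split; [apply: Hx => //; lia | apply: Hy => //; lia].
- move=> [/IHx [Nx Hx] /IHy [Ny Hy]]; exists (Nx + Ny) => i Hi [H1|H2].
  + left; apply: Hx => //; lia.
  + right; apply: Hy => //; lia.
- move=> /IHx [Nx Hx]; exists Nx => i Hi H; apply: Hx => //; lia.
- move=> [/IHx [Nx Hx] /IHy [Ny Hy]].
  exists (Nx + Ny) => i Hi [k [Hk Hj]]; exists k; split.
  + apply: Hy => //; lia.
  + move=> j Hj'; apply: Hx; [lia | exact: Hj].
- case: m => [[[N HN] _]|[_ [/IHx [Nx Hx] /IHy [Ny Hy]]]].
  + exists N => i Hi _; exact: HN.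
  + exists (Nx + Ny) => i Hi [k [Hk Hj]]; right; exists k; split.
    * apply: Hy => //; lia.
    * move=> j Hj'; apply: Hx; [lia | exact: Hj].
Qed.

Lemma C1 (Ap : finType) (w : word Ap) t : condsS w t -> soundU w t /\ soundW w t.
Proof.
elim: t => [||a|a|x IHx y IHy|x IHx y IHy|x IHx|m x IHx y IHy|m x IHx y IHy] //=.
- move=> [/IHx [? ?] /IHy [? ?]]; tauto.
- move=> [/IHx [? ?] /IHy [? ?]]; tauto.
- case: m => [[HG [/IHx [Ux Wx] /IHy [Uy Wy]]]|[_ [/IHx [? ?] /IHy [? ?]]]]; last tauto.
  have [N HN] := M2 (t := AU true x y) (conj Wx Wy).
  split; last tauto; split; last tauto.
  move=> n; have [k [Hk Hs]] := HG (n + N); exists k; split; first lia.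
  apply: HN => //; lia.
- case: m => [[[n HF] [/IHx [Ux Wx] /IHy [Uy Wy]]]|[_ [/IHx [? ?] /IHy [? ?]]]]; last tauto.
  have HN := N1 (t := AW true x y) (conj Ux Uy).
  split; first tauto; split; last tauto.
  exists n => k Hk; exact: HN (HF k Hk).
Qed.

Lemma C2 (Ap : finType) (w : word Ap) t : complete w t -> soundU w t -> soundW w t -> condsS w t.
Proof.
elim: t => [||a|a|x IHx y IHy|x IHx y IHy|x IHx|m x IHx y IHy|m x IHx y IHy] //=.
- move=> [? ?] [? ?] [? ?]; split; [exact: IHx | exact: IHy].
- move=> [? ?] [? ?] [? ?]; split; [exact: IHx | exact: IHy].
- case: m => [[_ [Cx Cy]] [HG [Ux Uy]] [Wx Wy]|[_ [? ?]] [_ [? ?]] [? ?]]; last first.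
    split; first done; split; [exact: IHx | exact: IHy].
  split; last (split; [exact: IHx | exact: IHy]).
  have HM := M1 (t := AU true x y) (conj I (conj Cx Cy)).
  move=> n; have [k [Hk Hs]] := HG n; exists k; split => //; exact: HM.
- case: m => [[_ [Cx Cy]] [Ux Uy] [[n HF] [Wx Wy]]|[_ [? ?]] [? ?] [_ [? ?]]]; last first.
    split; first done; split; [exact: IHx | exact: IHy].
  split; last (split; [exact: IHx | exact: IHy]).
  have [N HN] := N2 (t := AW true x y) (conj I (conj Cx Cy)).
  exists (n + N) => k Hk; apply: HN; first lia; apply: HF; lia.
Qed.

Lemma exact_annot (Ap : finType) (w : word Ap) p : ~~ has_lim p ->
  exists t, erase t = p /\ complete w t /\ soundU w t /\ soundW w t.
Proof.
elim: p => [||a|a|p IHp q IHq|p IHp q IHq|p IHp|p IHp q IHq|p IHp q IHq|p IHp|p IHp] //=.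
- by exists AT.
- by exists AF.
- by exists (AA a).
- by exists (ANA a).
- rewrite negb_or => /andP [/IHp [x [<- Hx]] /IHq [y [<- Hy]]].
  exists (AAnd x y) => /=; tauto.
- rewrite negb_or => /andP [/IHp [x [<- Hx]] /IHq [y [<- Hy]]].
  exists (AOr x y) => /=; tauto.
- move=> /IHp [x [<- Hx]]; exists (AX x) => /=; tauto.
- rewrite negb_or => /andP [/IHp [x [<- Hx]] /IHq [y [<- Hy]]].
  case: (classic (GFp w (FU (erase x) (erase y)))) => H.
  + exists (AU true x y) => /=; tauto.
  + exists (AU false x y) => /=; tauto.
- rewrite negb_or => /andP [/IHp [x [<- Hx]] /IHq [y [<- Hy]]].
  case: (classic (FGp w (FW (erase x) (erase y)))) => H.
  + exists (AW true x y) => /=; tauto.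
  + exists (AW false x y) => /=; tauto.
Qed.

Lemma mainGF (Ap : finType) (w : word Ap) p : ~~ has_lim p ->
  (sat w 0 (FGF p) <-> exists t, erase t = p /\ condsS w t /\ sat w 0 (FGF (mu t))).
Proof.
move=> Hp; rewrite sat0GF; split.
- move=> HG; have [t [Et [Ct [Ut Wt]]]] := exact_annot w Hp.
  exists t; split => //; split; first exact: C2.
  rewrite sat0GF => n; have [k [Hk Hs]] := HG n; exists k; split => //.
  apply: M1 => //; by rewrite Et.
- move=> [t [<- [Ct]]]; rewrite sat0GF => HG.
  have [_ Wt] := C1 Ct; have [N HN] := M2 Wt.
  move=> n; have [k [Hk Hs]] := HG (n + N); exists k; split; first lia.
  apply: HN => //; lia.
Qed.

Lemma mainFG (Ap : finType) (w : word Ap) p : ~~ has_lim p ->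
  (sat w 0 (FFG p) <-> exists t, erase t = p /\ condsS w t /\ sat w 0 (FFG (nu t))).
Proof.
move=> Hp; rewrite sat0FG; split.
- move=> [n HF]; have [t [Et [Ct [Ut Wt]]]] := exact_annot w Hp.
  exists t; split => //; split; first exact: C2.
  rewrite sat0FG; have [N HN] := N2 Ct.
  exists (n + N) => k Hk; apply: HN; first lia; rewrite Et; apply: HF; lia.
- move=> [t [<- [Ct]]]; rewrite sat0FG => -[n HF].
  have [Ut _] := C1 Ct.
  exists n => k Hk; exact: N1 (HF k Hk).
Qed.

Fixpoint enum Ap (p : form Ap) (k : aform Ap -> form Ap) {struct p} : form Ap :=
 match p with
 | FTrue => k AT | FFalse => k AF | FAtom a => k (AA a) | FNAtom a => k (ANA a)
 | FAnd p q => enum p (fun x => enum q (fun y => k (AAnd x y)))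
 | FOr p q => enum p (fun x => enum q (fun y => k (AOr x y)))
 | FX p => enum p (fun x => k (AX x))
 | FU p q => FOr (enum p (fun x => enum q (fun y => k (AU true x y))))
                 (enum p (fun x => enum q (fun y => k (AU false x y))))
 | FW p q => FOr (enum p (fun x => enum q (fun y => k (AW true x y))))
                 (enum p (fun x => enum q (fun y => k (AW false x y))))
 | FGF _ => FFalse | FFG _ => FFalse
 end.

Lemma enum_sat (Ap : finType) (w : word Ap) i p : forall k,
  sat w i (enum p k) <-> exists t, erase t = p /\ sat w i (k t).
Proof.
elim: p => [||a|a|p IHp q IHq|p IHp q IHq|p IHp|p IHp q IHq|p IHp q IHq|p IHp|p IHp] k /=.
- split; [move=> H; by exists AT | move=> [t [Et H]]; destruct t; simpl in Et; try discriminate; exact H].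
- split; [move=> H; by exists AF | move=> [t [Et H]]; destruct t; simpl in Et; try discriminate; exact H].
- split; [move=> H; by exists (AA a) | move=> [t [Et H]]; destruct t; simpl in Et; try discriminate; injection Et as ->; exact H].
- split; [move=> H; by exists (ANA a) | move=> [t [Et H]]; destruct t; simpl in Et; try discriminate; injection Et as ->; exact H].
- rewrite IHp; split.
  + move=> [x [Ex]]; rewrite IHq => -[y [Ey H]]; by exists (AAnd x y); rewrite /= Ex Ey.
  + move=> [t [Et H]]; case: t Et H => // x y [Ex Ey] H; exists x; split => //; rewrite IHq; by exists y.
- rewrite IHp; split.
  + move=> [x [Ex]]; rewrite IHq => -[y [Ey H]]; by exists (AOr x y); rewrite /= Ex Ey.
  + move=> [t [Et H]]; case: t Et H => // x y [Ex Ey] H; exists x; split => //; rewrite IHq; by exists y.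
- rewrite IHp; split.
  + move=> [x [Ex H]]; by exists (AX x); rewrite /= Ex.
  + move=> [t [Et H]]; case: t Et H => // x [Ex] H; by exists x.
- rewrite !IHp; split.
  + move=> [[x [Ex]]|[x [Ex]]]; rewrite IHq => -[y [Ey H]].
    * by exists (AU true x y); rewrite /= Ex Ey.
    * by exists (AU false x y); rewrite /= Ex Ey.
  + move=> [t [Et H]]; case: t Et H => // -[] x y [Ex Ey] H; [left|right]; exists x; split => //; rewrite IHq; by exists y.
- rewrite !IHp; split.
  + move=> [[x [Ex]]|[x [Ex]]]; rewrite IHq => -[y [Ey H]].
    * by exists (AW true x y); rewrite /= Ex Ey.
    * by exists (AW false x y); rewrite /= Ex Ey.
  + move=> [t [Et H]]; case: t Et H => // -[] x y [Ex Ey] H; [left|right]; exists x; split => //; rewrite IHq; by exists y.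
- split => //; move=> [t [Et H]]; destruct t; discriminate.
- split => //; move=> [t [Et H]]; destruct t; discriminate.
Qed.

Lemma nf_noW Ap (f : form Ap) : ~~ has_lim f -> ~~ has_W f -> normal_form f.
Proof.
induction f; simpl; intros H1 H2; rewrite ?negb_or in H1 H2;
  repeat match goal with H : is_true (_ && _) |- _ => move/andP: H => [? ?] end;
  try discriminate; repeat (apply/andP; split); auto.
Qed.

Lemma nf_noU Ap (f : form Ap) : ~~ has_lim f -> ~~ has_U f -> normal_form f.
Proof.
induction f; simpl; intros H1 H2; rewrite ?negb_or in H1 H2;
  repeat match goal with H : is_true (_ && _) |- _ => move/andP: H => [? ?] end;
  try discriminate; repeat (apply/andP; split); auto.
Qed.

Lemma mu_props Ap (t : aform Ap) : ~~ has_lim (mu t) && ~~ has_W (mu t).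
Proof.
induction t; simpl; try destruct b; simpl; rewrite ?negb_or;
  repeat match goal with H : is_true (_ && _) |- _ => move/andP: H => [? ?] end;
  repeat (apply/andP; split); auto.
Qed.

Lemma nu_props Ap (t : aform Ap) : ~~ has_lim (nu t) && ~~ has_U (nu t).
Proof.
induction t; simpl; try destruct b; simpl; rewrite ?negb_or;
  repeat match goal with H : is_true (_ && _) |- _ => move/andP: H => [? ?] end;
  repeat (apply/andP; split); auto.
Qed.

Lemma nf_GF_mu Ap (t : aform Ap) : normal_form (FGF (mu t)).
Proof.
have /andP [H1 H2] := mu_props t.
by rewrite /= H1 H2 nf_noW.
Qed.

Lemma nf_FG_nu Ap (t : aform Ap) : normal_form (FFG (nu t)).
Proof.
have /andP [H1 H2] := nu_props t.
by rewrite /= H1 H2 nf_noU.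
Qed.

Lemma nf_condsF Ap (t : aform Ap) acc : normal_form acc -> normal_form (condsF t acc).
Proof.
elim: t acc => [||a|a|x IHx y IHy|x IHx y IHy|x IHx|m x IHx y IHy|m x IHx y IHy] acc H; cbn [condsF];
  try by auto.
- case: m; last by auto.
  change (normal_form (FGF (FU (mu x) (mu y))) && normal_form (condsF x (condsF y acc))).
  by rewrite (nf_GF_mu (AU true x y) : normal_form (FGF (FU (mu x) (mu y)))) IHx ?IHy.
- case: m; last by auto.
  change (normal_form (FFG (FW (nu x) (nu y))) && normal_form (condsF x (condsF y acc))).
  by rewrite (nf_FG_nu (AW true x y) : normal_form (FFG (FW (nu x) (nu y)))) IHx ?IHy.
Qed.

Lemma nf_enum Ap (p : form Ap) : forall k, (forall t, normal_form (k t)) -> normal_form (enum p k).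
Proof.
elim: p => [||a|a|p IHp q IHq|p IHp q IHq|p IHp|p IHp q IHq|p IHp q IHq|p IHp|p IHp] k H //=;
  rewrite ?IHp //; try (by move=> x; rewrite IHq).
Qed.

Fixpoint cnt Ap (p : form Ap) : nat := match p with
 | FTrue | FFalse | FAtom _ | FNAtom _ => 0
 | FAnd p q | FOr p q => cnt p + cnt q
 | FU p q | FW p q => (cnt p + cnt q).+1
 | FX p | FGF p | FFG p => cnt p end.

Lemma cnt_size Ap (p : form Ap) : 2 * cnt p + 1 <= fsize p.
Proof. elim: p => //= *; lia. Qed.

Lemma mu_size Ap (t : aform Ap) : fsize (mu t) <= fsize (erase t).
Proof. induction t; simpl; try destruct b; simpl; lia. Qed.

Lemma nu_size Ap (t : aform Ap) : fsize (nu t) <= fsize (erase t).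
Proof. induction t; simpl; try destruct b; simpl; lia. Qed.

Lemma condsF_size Ap (t : aform Ap) acc :
  fsize (condsF t acc) <= fsize acc + cnt (erase t) * (fsize (erase t) + 2).
Proof.
elim: t acc => [||a|a|x IHx y IHy|x IHx y IHy|x IHx|m x IHx y IHy|m x IHx y IHy] acc; cbn [condsF erase cnt fsize];
  try lia.
- have := IHx (condsF y acc); have := IHy acc; nia.
- have := IHx (condsF y acc); have := IHy acc; nia.
- have := IHx acc; nia.
- have := IHx (condsF y acc); have := IHy acc; have := mu_size x; have := mu_size y.
  case: m; cbn [fsize]; nia.
- have := IHx (condsF y acc); have := IHy acc; have := nu_size x; have := nu_size y.
  case: m; cbn [fsize]; nia.
Qed.

Lemma enum2_size Ap (p q : form Ap)
  (IHp : forall k B, (forall t, erase t = p -> fsize (k t) <= B) -> (fsize (enum p k)).+1 <= 2 ^ cnt p * B.+1)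
  (IHq : forall k B, (forall t, erase t = q -> fsize (k t) <= B) -> (fsize (enum q k)).+1 <= 2 ^ cnt q * B.+1)
  (k : aform Ap -> aform Ap -> form Ap) B :
  (forall x y, erase x = p -> erase y = q -> fsize (k x y) <= B) ->
  (fsize (enum p (fun x => enum q (fun y => k x y)))).+1 <= 2 ^ (cnt p + cnt q) * B.+1.
Proof.
move=> H; have pos : 0 < 2 ^ cnt q * B.+1 by rewrite muln_gt0 expn_gt0.
rewrite expnD -mulnA -[X in _ <= 2 ^ cnt p * X](prednK pos).
apply: IHp => x Ex; rewrite -ltnS prednK //.
apply: IHq => y Ey; exact: H.
Qed.

Lemma enum_size Ap (p : form Ap) : ~~ has_lim p -> forall k B,
  (forall t, erase t = p -> fsize (k t) <= B) -> (fsize (enum p k)).+1 <= 2 ^ cnt p * B.+1.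
Proof.
elim: p => [||a|a|p IHp q IHq|p IHp q IHq|p IHp|p IHp q IHq|p IHp q IHq|p IHp|p IHp] //=;
  try (move=> _ k B H; rewrite expn0 mul1n ltnS; apply: H; reflexivity).
- rewrite negb_or => /andP [/IHp {}IHp /IHq {}IHq] k B H.
  refine (enum2_size IHp IHq (k := fun x y => k (AAnd x y)) _) => x y Ex Ey; apply: H; by rewrite /= Ex Ey.
- rewrite negb_or => /andP [/IHp {}IHp /IHq {}IHq] k B H.
  refine (enum2_size IHp IHq (k := fun x y => k (AOr x y)) _) => x y Ex Ey; apply: H; by rewrite /= Ex Ey.
- move=> /IHp {}IHp k B H; apply: IHp => x Ex; apply: H; by rewrite /= Ex.
- rewrite negb_or => /andP [/IHp {}IHp /IHq {}IHq] k B H.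
  have h1 := enum2_size IHp IHq (k := fun x y => k (AU true x y)) (B := B).
  have h2 := enum2_size IHp IHq (k := fun x y => k (AU false x y)) (B := B).
  have {h1} h1 := h1 (fun x y Ex Ey => H (AU true x y) (ltac:(by rewrite /= Ex Ey))).
  have {h2} h2 := h2 (fun x y Ex Ey => H (AU false x y) (ltac:(by rewrite /= Ex Ey))).
  cbv beta in h1, h2; rewrite expnS -mulnA; lia.
- rewrite negb_or => /andP [/IHp {}IHp /IHq {}IHq] k B H.
  have h1 := enum2_size IHp IHq (k := fun x y => k (AW true x y)) (B := B).
  have h2 := enum2_size IHp IHq (k := fun x y => k (AW false x y)) (B := B).
  have {h1} h1 := h1 (fun x y Ex Ey => H (AW true x y) (ltac:(by rewrite /= Ex Ey))).
  have {h2} h2 := h2 (fun x y Ex Ey => H (AW false x y) (ltac:(by rewrite /= Ex Ey))).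
  cbv beta in h1, h2; rewrite expnS -mulnA; lia.
Qed.

Lemma arith c n : 2 * c + 1 <= n -> 2 ^ c * ((c + 1) * (n + 2)) <= 3 ^ n * n.
Proof.
move=> H.
have h1 : c + 1 <= 2 ^ c by rewrite addn1; exact: (ltn_expl c (isT : 1 < 2)).
have h4 : (2 * 2) ^ c <= (3 ^ 2) ^ c by case: c {H h1} => [|c] //; rewrite leq_exp2r.
have h2 : 2 ^ c * (c + 1) <= 3 ^ (2 * c).
  apply: (leq_trans (leq_mul (leqnn _) h1)).
  by rewrite -expnMn expnM.
have h3 : 3 ^ (2 * c + 1) <= 3 ^ n by apply: leq_pexp2l.
rewrite mulnA; apply: (leq_trans (leq_mul h2 (_ : n + 2 <= 3 * n))); last first.
  have -> : 3 ^ (2 * c) * (3 * n) = 3 ^ (2 * c + 1) * n by rewrite expnD expn1 mulnA.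
  by apply: leq_mul.
lia.
Qed.

Theorem proposition3 (Ap : finType) (phi : form Ap) :
  ~~ has_lim phi ->
  (exists psi : form Ap, normal_form psi /\
      fsize psi <= 3 ^ fsize phi * fsize phi /\ ltl_equiv (FGF phi) psi) /\
  (exists psi : form Ap, normal_form psi /\
      fsize psi <= 3 ^ fsize phi * fsize phi /\ ltl_equiv (FFG phi) psi).
Proof.
move=> Hp.
have key : forall (acc : aform Ap -> form Ap),
    (forall t, fsize (acc t) <= fsize (erase t) + 1) ->
    fsize (enum phi (fun t => condsF t (acc t))) <= 3 ^ fsize phi * fsize phi.
  move=> acc Hacc.
  have := enum_size Hp (k := fun t => condsF t (acc t))
     (B := cnt phi * (fsize phi + 2) + fsize phi + 1).
  have Hb : forall t, erase t = phi -> fsize (condsF t (acc t)) <= cnt phi * (fsize phi + 2) + fsize phi + 1.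
    move=> t Et; have := condsF_size t (acc t); have := Hacc t; rewrite Et; lia.
  move=> /(_ Hb) H1.
  have H2 := arith (cnt_size phi).
  have E : (cnt phi * (fsize phi + 2) + fsize phi + 1).+1 = (cnt phi + 1) * (fsize phi + 2) by lia.
  rewrite E in H1; lia.
split.
- exists (enum phi (fun t => condsF t (FGF (mu t)))); split; [|split].
  + apply: nf_enum => t; apply: nf_condsF; exact: nf_GF_mu.
  + apply: key => t /=; have := mu_size t; lia.
  + move=> w; rewrite mainGF // enum_sat; split.
    * move=> [t [Et [Ct Ht]]]; exists t; split => //; rewrite condsF_sat; tauto.
    * move=> [t [Et]]; rewrite condsF_sat => -[Ct Ht]; by exists t.
- exists (enum phi (fun t => condsF t (FFG (nu t)))); split; [|split].
  + apply: nf_enum => t; apply: nf_condsF; exact: nf_FG_nu.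
  + apply: key => t /=; have := nu_size t; lia.
  + move=> w; rewrite mainFG // enum_sat; split.
    * move=> [t [Et [Ct Ht]]]; exists t; split => //; rewrite condsF_sat; tauto.
    * move=> [t [Et]]; rewrite condsF_sat => -[Ct Ht]; by exists t.
Qed.
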